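(* Let $n\geq1$ and, on the second jet space $J^2(n,1)$ with coordinates $(x^i,u,u_i,u_{ij})$, let $U=(u_{ij})$ be the (symmetric) matrix of second-order coordinates and $U_k$ its upper-left $k\times k$ submatrix. Then the second-order PDEs $\{\det U_k=0\}$, $k=1,\dots,n$, are all locally contactomorphic to each other, i.e. for any $k,l$ there is a local contact transformation of $J^1(n,1)$ whose prolongation to $J^2(n,1)$ maps $\{\det U_k=0\}$ onto $\{\det U_l=0\}$. (In particular, for $n=2$, $u_{11}u_{22}-u_{12}^2=0$ and $u_{11}=0$ are contactomorphic.)
   Context: $J^1(n,1)$ has coordinates $(x^i,u,u_i)$ and contact distribution $\ker(du-u_idx^i)$; $J^2(n,1)$ is identified (locally) with the bundle of Lagrangian planes of this contact distribution, the point $(x^i,u,u_i,u_{ij})$ corresponding to the plane $\langle \partial_{x^i}+u_i\partial_u+u_{ij}\partial_{u_j}\rangle$. A contact transformation $\phi$ prolongs to $J^2(n,1)$ by $L\mapsto d\phi(L)$. *)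

(* Defs.v *)
From Stdlib Require Import Reals Arith List.
Import ListNotations.
Open Scope R_scope.

(** Vectors of R^m are represented by [nat -> R]; only indices < m matter. *)

Fixpoint sumR (m : nat) (f : nat -> R) : R :=
  match m with
  | O => 0
  | S m' => sumR m' f + f m'
  end.

Definition eqv (m : nat) (x y : nat -> R) : Prop :=
  forall a, (a < m)%nat -> x a = y a.

Definition open_in (m : nat) (O : (nat -> R) -> Prop) : Prop :=
  forall x, O x -> exists eps, 0 < eps /\
    forall y, (forall a, (a < m)%nat -> Rabs (y a - x a) < eps) -> O y.

Definition continuous_at_in (m : nat) (f : (nat -> R) -> R) (x : nat -> R) : Prop :=
  forall eps, 0 < eps -> exists delta, 0 < delta /\
    forall y, (forall a, (a < m)%nat -> Rabs (y a - x a) < delta) ->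
      Rabs (f y - f x) < eps.

Definition upd (x : nat -> R) (i : nat) (r : R) : nat -> R :=
  fun j => if Nat.eqb j i then r else x j.

Definition is_partial (f : (nat -> R) -> R) (i : nat) (x : nat -> R) (l : R) : Prop :=
  derivable_pt_lim (fun t => f (upd x i (x i + t))) 0 l.

(** f is C^infinity on the open set O of R^m: all iterated partial
    derivatives D s (s = list of directions, head = last derivative taken)
    exist and are continuous on O. *)
Definition smooth_fun (m : nat) (O : (nat -> R) -> Prop) (f : (nat -> R) -> R) : Prop :=
  exists D : list nat -> (nat -> R) -> R,
    (forall x, O x -> D nil x = f x) /\
    (forall s x, O x ->
       continuous_at_in m (D s) x /\
       forall i, (i < m)%nat -> is_partial (D s) i x (D (cons i s) x)).

Definition smooth_map (m k : nat) (O : (nat -> R) -> Prop)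
  (phi : (nat -> R) -> (nat -> R)) : Prop :=
  forall j, (j < k)%nat -> smooth_fun m O (fun z => phi z j).

Definition dmap (m k : nat) (phi : (nat -> R) -> (nat -> R)) (z v w : nat -> R) : Prop :=
  forall j, (j < k)%nat -> exists J : nat -> R,
    (forall a, (a < m)%nat -> is_partial (fun y => phi y j) a z (J a)) /\
    w j = sumR m (fun a => J a * v a).

(** Coordinates on J^1(n,1) = R^(2n+1):
    x^i = z i (i < n), u = z n, u_i = z (n+1+i) (i < n). *)
Definition dimJ1 (n : nat) : nat := (2 * n + 1)%nat.

Definition theta (n : nat) (z v : nat -> R) : R :=
  v n - sumR n (fun i => z (n + 1 + i)%nat * v i).

Definition local_contact (n : nat) (O : (nat -> R) -> Prop)
  (phi : (nat -> R) -> (nat -> R)) : Prop :=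
  open_in (dimJ1 n) O /\
  smooth_map (dimJ1 n) (dimJ1 n) O phi /\
  (exists (O' : (nat -> R) -> Prop) (psi : (nat -> R) -> (nat -> R)),
     open_in (dimJ1 n) O' /\ smooth_map (dimJ1 n) (dimJ1 n) O' psi /\
     (forall z, O z -> O' (phi z) /\ eqv (dimJ1 n) (psi (phi z)) z) /\
     (forall w, O' w -> O (psi w) /\ eqv (dimJ1 n) (phi (psi w)) w)) /\
  (forall z v w, O z -> theta n z v = 0 -> dmap (dimJ1 n) (dimJ1 n) phi z v w ->
     theta n (phi z) w = 0).

(** Points of J^2(n,1): (z, U) with U = (u_ij) symmetric n x n. *)
Definition J2pt : Type := ((nat -> R) * (nat -> nat -> R))%type.

Definition sym (n : nat) (U : nat -> nat -> R) : Prop :=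
  forall i j, (i < n)%nat -> (j < n)%nat -> U i j = U j i.

(** E_i = d/dx^i + u_i d/du + u_ij d/du_j : spanning vectors of the Lagrangian
    plane associated with the point (z, U) *)
Definition Evec (n : nat) (z : nat -> R) (U : nat -> nat -> R) (i : nat) : nat -> R :=
  fun a =>
    if (a <? n)%nat then (if Nat.eqb a i then 1 else 0)
    else if Nat.eqb a n then z (n + 1 + i)%nat
    else if (a <? 2 * n + 1)%nat then U i (a - (n + 1))%nat
    else 0.

Definition span_eq (m k : nat) (A B : nat -> nat -> R) : Prop :=
  (forall i, (i < k)%nat -> exists c : nat -> R,
      forall a, (a < m)%nat -> A i a = sumR k (fun j => c j * B j a)) /\
  (forall i, (i < k)%nat -> exists c : nat -> R,
      forall a, (a < m)%nat -> B i a = sumR k (fun j => c j * A j a)).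

(** prolongation phi^(1) : L |-> dphi(L), as a relation P |-> P' *)
Definition prolong (n : nat) (phi : (nat -> R) -> (nat -> R)) (P P' : J2pt) : Prop :=
  sym n (snd P') /\ eqv (dimJ1 n) (fst P') (phi (fst P)) /\
  exists A : nat -> nat -> R,
    (forall i, (i < n)%nat ->
       dmap (dimJ1 n) (dimJ1 n) phi (fst P) (Evec n (fst P) (snd P) i) (A i)) /\
    span_eq (dimJ1 n) n A (Evec n (fst P') (snd P')).

Definition open_J2 (n : nat) (W : J2pt -> Prop) : Prop :=
  forall P, W P -> sym n (snd P) /\ exists eps, 0 < eps /\
    forall Q : J2pt, sym n (snd Q) ->
      (forall a, (a < dimJ1 n)%nat -> Rabs (fst Q a - fst P a) < eps) ->
      (forall i j, (i < n)%nat -> (j < n)%nat -> Rabs (snd Q i j - snd P i j) < eps) ->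
      W Q.

Definition minor (M : nat -> nat -> R) (j : nat) : nat -> nat -> R :=
  fun r c => M (S r) (if (c <? j)%nat then c else S c).

Fixpoint detk (k : nat) (M : nat -> nat -> R) : R :=
  match k with
  | O => 1
  | S k' => sumR (S k') (fun j => (-1) ^ j * M O j * detk k' (minor M j))
  end.

(* Main.v *)
Require Import Defs.
From Stdlib Require Import Reals Arith.
Open Scope R_scope.
From Stdlib Require Import Reals Arith Lia Lra FunctionalExtensionality List.
Import ListNotations.
Open Scope R_scope.

Lemma sumR_ext m f g : (forall a, (a < m)%nat -> f a = g a) -> sumR m f = sumR m g.
Proof. induction m; simpl; intros H; [reflexivity|]. rewrite IHm by (intros; apply H; lia). rewrite H by lia. reflexivity. Qed.
Lemma sumR_add m f g : sumR m (fun a => f a + g a) = sumR m f + sumR m g.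
Proof. induction m; simpl; [lra|]. rewrite IHm. lra. Qed.
Lemma sumR_scal m c f : sumR m (fun a => c * f a) = c * sumR m f.
Proof. induction m; simpl; [lra|]. rewrite IHm. lra. Qed.
Lemma sumR_opp m f : sumR m (fun a => - f a) = - sumR m f.
Proof. induction m; simpl; [lra|]. rewrite IHm. lra. Qed.
Lemma sumR_zero m : sumR m (fun _ => 0) = 0.
Proof. induction m; simpl; [lra|]. rewrite IHm. lra. Qed.
Lemma sumR_swap m n (f : nat -> nat -> R) :
  sumR m (fun a => sumR n (fun i => f a i)) = sumR n (fun i => sumR m (fun a => f a i)).
Proof. induction m; simpl. rewrite sumR_zero; auto. rewrite IHm, <- sumR_add. reflexivity. Qed.
Lemma sumR_delta m b f : (b < m)%nat -> sumR m (fun a => (if Nat.eqb a b then 1 else 0) * f a) = f b.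
Proof.
  induction m; intros H; [lia|]. simpl. destruct (Nat.eq_dec b m).
  - subst. rewrite Nat.eqb_refl. rewrite (sumR_ext _ _ (fun _ => 0)). rewrite sumR_zero. lra.
    intros a Ha. replace (Nat.eqb a m) with false by (symmetry; apply Nat.eqb_neq; lia). lra.
  - rewrite IHm by lia. replace (Nat.eqb m b) with false by (symmetry; apply Nat.eqb_neq; lia). lra.
Qed.
Lemma sumR_delta' m b f : (b < m)%nat -> sumR m (fun a => f a * (if Nat.eqb a b then 1 else 0)) = f b.
Proof. intros H. rewrite <- (sumR_delta m b f H). apply sumR_ext. intros; lra. Qed.
Lemma sumR_le m f g : (forall a, (a < m)%nat -> f a <= g a) -> sumR m f <= sumR m g.
Proof. induction m; simpl; intros H; [lra|]. pose proof (H m ltac:(lia)). pose proof (IHm ltac:(intros; apply H; lia)). lra. Qed.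
Lemma sumR_nonneg m f : (forall a, (a < m)%nat -> 0 <= f a) -> 0 <= sumR m f.
Proof. intros H. rewrite <- (sumR_zero m). apply sumR_le. auto. Qed.
Lemma sumR_term m f b : (forall a, (a < m)%nat -> 0 <= f a) -> (b < m)%nat -> f b <= sumR m f.
Proof.
  induction m; intros H Hb; [lia|]. simpl. destruct (Nat.eq_dec b m).
  - subst. pose proof (sumR_nonneg m f ltac:(intros; apply H; lia)). lra.
  - pose proof (IHm ltac:(intros; apply H; lia) ltac:(lia)). pose proof (H m ltac:(lia)). lra.
Qed.
Lemma sumR_const_le m f c : (forall a, (a < m)%nat -> f a <= c) -> sumR m f <= INR m * c.
Proof. induction m; simpl; intros H; [lra|]. pose proof (H m ltac:(lia)). pose proof (IHm ltac:(intros; apply H; lia)).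
  destruct m; simpl in *; lra. Qed.

Lemma cont_const m c x : continuous_at_in m (fun _ => c) x.
Proof. intros e He. exists 1. split; [lra|]. intros y _. rewrite Rminus_diag, Rabs_R0. lra. Qed.
Lemma cont_coord m a x : (a < m)%nat -> continuous_at_in m (fun y => y a) x.
Proof. intros Ha e He. exists e. split; [lra|]. intros y Hy. apply Hy; auto. Qed.
Lemma cont_add m f g x : continuous_at_in m f x -> continuous_at_in m g x ->
  continuous_at_in m (fun y => f y + g y) x.
Proof.
  intros Hf Hg e He. destruct (Hf (e/2) ltac:(lra)) as [d1 [Hd1 H1]].
  destruct (Hg (e/2) ltac:(lra)) as [d2 [Hd2 H2]].
  exists (Rmin d1 d2). split. apply Rmin_pos; auto.
  intros y Hy. assert (A1 := H1 y (fun a Ha => Rlt_le_trans _ _ _ (Hy a Ha) (Rmin_l _ _))).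
  assert (A2 := H2 y (fun a Ha => Rlt_le_trans _ _ _ (Hy a Ha) (Rmin_r _ _))).
  replace (f y + g y - (f x + g x)) with ((f y - f x) + (g y - g x)) by ring.
  eapply Rle_lt_trans. apply Rabs_triang. lra.
Qed.
Lemma cont_mul m f g x : continuous_at_in m f x -> continuous_at_in m g x ->
  continuous_at_in m (fun y => f y * g y) x.
Proof.
  intros Hf Hg e He.
  set (K := Rabs (f x) + Rabs (g x) + 1).
  assert (HK : 0 < K) by (unfold K; pose proof (Rabs_pos (f x)); pose proof (Rabs_pos (g x)); lra).
  set (e1 := Rmin 1 (e / (2 * K))).
  assert (He1 : 0 < e1) by (apply Rmin_pos; [lra| apply Rdiv_lt_0_compat; lra]).
  destruct (Hf e1 He1) as [d1 [Hd1 H1]]. destruct (Hg e1 He1) as [d2 [Hd2 H2]].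
  exists (Rmin d1 d2). split. apply Rmin_pos; auto.
  intros y Hy. assert (A1 := H1 y (fun a Ha => Rlt_le_trans _ _ _ (Hy a Ha) (Rmin_l _ _))).
  assert (A2 := H2 y (fun a Ha => Rlt_le_trans _ _ _ (Hy a Ha) (Rmin_r _ _))).
  replace (f y * g y - f x * g x) with ((f y - f x) * g y + f x * (g y - g x)) by ring.
  eapply Rle_lt_trans. apply Rabs_triang. rewrite !Rabs_mult.
  assert (Hgy : Rabs (g y) <= Rabs (g x) + 1).
  { replace (g y) with ((g y - g x) + g x) by ring. eapply Rle_trans. apply Rabs_triang.
    assert (e1 <= 1) by apply Rmin_l. lra. }
  assert (He1' : e1 <= e / (2 * K)) by apply Rmin_r.
  assert (e / (2*K) * K = e/2) by (field; lra).
  pose proof (Rabs_pos (f x)). pose proof (Rabs_pos (g y)). pose proof (Rabs_pos (f y - f x)).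
  pose proof (Rabs_pos (g y - g x)).
  assert (Rabs (f y - f x) * Rabs (g y) < e1 * K).
  { apply Rle_lt_trans with (Rabs (f y - f x) * K). apply Rmult_le_compat_l; try lra. unfold K; lra.
    apply Rmult_lt_compat_r; lra. }
  assert (Rabs (f x) * Rabs (g y - g x) <= K * e1).
  { apply Rmult_le_compat; try lra. unfold K; pose proof (Rabs_pos (g x)); lra. }
  assert (e1 * K <= e/2) by (rewrite <- H; apply Rmult_le_compat_r; lra).
  lra.
Qed.
Lemma cont_sumR m N F x : (forall j, (j < N)%nat -> continuous_at_in m (F j) x) ->
  continuous_at_in m (fun y => sumR N (fun j => F j y)) x.
Proof. induction N; intros H; simpl. apply cont_const. apply cont_add. apply IHN; intros; apply H; lia. apply H; lia. Qed.

Lemma upd_same x i : upd x i (x i + 0) = x.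
Proof. apply functional_extensionality. intros j. unfold upd. destruct (Nat.eqb_spec j i); subst; auto. lra. Qed.
Lemma part_const c i x : is_partial (fun _ => c) i x 0.
Proof. unfold is_partial. apply derivable_pt_lim_const. Qed.
Lemma part_coord a i x : is_partial (fun y => y a) i x (if Nat.eqb i a then 1 else 0).
Proof.
  unfold is_partial, upd. rewrite (Nat.eqb_sym i a). destruct (Nat.eqb a i).
  - replace (fun t => x i + t) with (plus_fct (fct_cte (x i)) id) by reflexivity.
    replace 1 with (0 + 1) by ring. apply derivable_pt_lim_plus. apply derivable_pt_lim_const. apply derivable_pt_lim_id.
  - apply derivable_pt_lim_const.
Qed.
Lemma part_add f g i x l1 l2 : is_partial f i x l1 -> is_partial g i x l2 ->
  is_partial (fun y => f y + g y) i x (l1 + l2).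
Proof. unfold is_partial. intros H1 H2. apply (derivable_pt_lim_plus _ _ _ _ _ H1 H2). Qed.
Lemma part_mul f g i x l1 l2 : is_partial f i x l1 -> is_partial g i x l2 ->
  is_partial (fun y => f y * g y) i x (l1 * g x + f x * l2).
Proof. unfold is_partial. intros H1 H2. pose proof (derivable_pt_lim_mult _ _ _ _ _ H1 H2) as H.
  unfold mult_fct in H; simpl in H. rewrite upd_same in H. exact H. Qed.
Lemma part_ext f g i x l1 l2 : (forall y, f y = g y) -> l1 = l2 -> is_partial f i x l1 -> is_partial g i x l2.
Proof. intros H -> Hf. replace g with f; auto. apply functional_extensionality; auto. Qed.
Lemma part_opp f i x l : is_partial f i x l -> is_partial (fun y => - f y) i x (- l).
Proof. intros H. apply (part_ext (fun y => (-1) * f y) _ i x (0 * f x + (-1) * l)); [intros; ring| ring|].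
  apply part_mul. apply part_const. auto. Qed.
Lemma part_sub f g i x l1 l2 : is_partial f i x l1 -> is_partial g i x l2 ->
  is_partial (fun y => f y - g y) i x (l1 - l2).
Proof. intros H1 H2. apply (part_ext (fun y => f y + - g y) _ i x (l1 + - l2)); [intros; ring| ring|].
  apply part_add; auto. apply part_opp; auto. Qed.
Lemma part_sumR N F i x L : (forall j, (j < N)%nat -> is_partial (F j) i x (L j)) ->
  is_partial (fun y => sumR N (fun j => F j y)) i x (sumR N L).
Proof. induction N; intros H; simpl. apply part_const. apply part_add. apply IHN; intros; apply H; lia. apply H; lia. Qed.

Definition dl (i a : nat) : R := if Nat.eqb i a then 1 else 0.

Lemma smooth_ext m O f g : (forall x, f x = g x) -> smooth_fun m O g -> smooth_fun m O f.
Proof. intros H [D [H0 H1]]. exists D. split; auto. intros x Hx. rewrite H0; auto. Qed.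
Lemma smooth_const m O c : smooth_fun m O (fun _ => c).
Proof. exists (fun s _ => match s with nil => c | _ => 0 end). split; auto.
  intros s x _. destruct s; split; try apply cont_const; intros; apply part_const. Qed.
Lemma smooth_coord m O a : (a < m)%nat -> smooth_fun m O (fun z => z a).
Proof.
  intros Ha. exists (fun s z => match s with nil => z a | i :: nil => dl i a | _ => 0 end).
  split; auto. intros s x _. destruct s as [|j [|k s]]; split.
  - apply cont_coord; auto.
  - intros i _. apply part_coord.
  - apply cont_const.
  - intros; apply part_const.
  - apply cont_const.
  - intros; apply part_const.
Qed.
Lemma smooth_prod m O a b : (a < m)%nat -> (b < m)%nat -> smooth_fun m O (fun z => z a * z b).
Proof.
  intros Ha Hb.
  exists (fun s z => match s with nil => z a * z b
                     | i :: nil => dl i a * z b + z a * dl i b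
                     | j :: i :: nil => dl i a * dl j b + dl j a * dl i b
                     | _ => 0 end).
  split; auto. intros s x _. destruct s as [|j [|k [|p s]]]; split.
  - apply cont_mul; apply cont_coord; auto.
  - intros i _. apply part_mul; apply part_coord.
  - apply cont_add; apply cont_mul; try apply cont_const; apply cont_coord; auto.
  - intros i _. eapply part_ext; [intros; reflexivity| |].
    2:{ apply part_add; apply part_mul; try apply part_const; apply part_coord. }
    unfold dl. ring.
  - apply cont_const.
  - intros; apply part_const.
  - apply cont_const.
  - intros; apply part_const.
Qed.
Lemma smooth_add m O f g : smooth_fun m O f -> smooth_fun m O g -> smooth_fun m O (fun z => f z + g z).
Proof.
  intros [D1 [H10 H11]] [D2 [H20 H21]]. exists (fun s z => D1 s z + D2 s z). split.
  intros; rewrite H10, H20; auto.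
  intros s x Hx. destruct (H11 s x Hx) as [C1 P1]. destruct (H21 s x Hx) as [C2 P2]. split.
  apply cont_add; auto. intros i Hi. apply part_add; auto.
Qed.
Lemma smooth_mulc m O c f : smooth_fun m O f -> smooth_fun m O (fun z => c * f z).
Proof.
  intros [D1 [H10 H11]]. exists (fun s z => c * D1 s z). split.
  intros; rewrite H10; auto.
  intros s x Hx. destruct (H11 s x Hx) as [C1 P1]. split.
  apply cont_mul; auto. apply cont_const. intros i Hi.
  apply (part_ext (fun z => c * D1 s z) _ i x (0 * D1 s x + c * D1 (i :: s) x)); [intros; reflexivity| ring |].
  apply part_mul. apply part_const. apply P1; auto.
Qed.
Lemma smooth_sumR m O N F : (forall j, (j < N)%nat -> smooth_fun m O (F j)) ->
  smooth_fun m O (fun z => sumR N (fun j => F j z)).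
Proof. induction N; intros H; simpl. apply smooth_const. apply smooth_add. apply IHN; intros; apply H; lia. apply H; lia. Qed.

Section Leg.
Variable r : nat -> bool.
Variable n : nat.

Definition Qf (z : nat -> R) : R := z n - sumR n (fun j => if r j then z j * z (n+1+j)%nat else 0).
Definition phiL (z : nat -> R) (a : nat) : R :=
  if (a <? n)%nat then (if r a then z (n+1+a)%nat else z a)
  else if Nat.eqb a n then Qf z
  else if (a <? 2*n+1)%nat then (if r (a-(n+1))%nat then - z (a-(n+1))%nat else z (n+1+(a-(n+1)))%nat)
  else z a.
Definition psiL (w : nat -> R) (a : nat) : R :=
  if (a <? n)%nat then (if r a then - w (n+1+a)%nat else w a)
  else if Nat.eqb a n then Qf w
  else if (a <? 2*n+1)%nat then (if r (a-(n+1))%nat then w (a-(n+1))%nat else w (n+1+(a-(n+1)))%nat)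
  else w a.
Definition DJ (z : nat -> R) (j a : nat) : R :=
  if (j <? n)%nat then (if r j then dl a (n+1+j) else dl a j)
  else if Nat.eqb j n then dl a n - sumR n (fun i => if r i then dl a i * z (n+1+i)%nat + z i * dl a (n+1+i) else 0)
  else if (j <? 2*n+1)%nat then (if r (j-(n+1))%nat then - dl a (j-(n+1)) else dl a (n+1+(j-(n+1))))
  else dl a j.

Lemma idx_x j : (j < n)%nat -> (j <? n)%nat = true.
Proof. intros; apply Nat.ltb_lt; auto. Qed.
Lemma idx_p1 j : (j <? n)%nat = false -> Nat.eqb j n = false -> (j <? 2*n+1)%nat = true ->
   (j = n+1+(j-(n+1)))%nat /\ (j - (n+1) < n)%nat.
Proof. intros H1 H2 H3. apply Nat.ltb_ge in H1. apply Nat.eqb_neq in H2. apply Nat.ltb_lt in H3. lia. Qed.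

Lemma phiL_x z j : (j < n)%nat -> phiL z j = if r j then z (n+1+j)%nat else z j.
Proof. intros H. unfold phiL. rewrite idx_x; auto. Qed.
Lemma phiL_u z : phiL z n = Qf z.
Proof. unfold phiL. rewrite Nat.ltb_irrefl, Nat.eqb_refl. auto. Qed.
Lemma ltb_false a b : (b <= a)%nat -> (a <? b)%nat = false.
Proof. intros; apply Nat.ltb_ge; auto. Qed.
Lemma eqb_false a b : a <> b -> Nat.eqb a b = false.
Proof. intros; apply Nat.eqb_neq; auto. Qed.
Lemma phiL_p z j : (j < n)%nat -> phiL z (n+1+j)%nat = if r j then - z j else z (n+1+j)%nat.
Proof. intros H. unfold phiL. rewrite ltb_false, eqb_false by lia.
  replace (n+1+j <? 2*n+1)%nat with true by (symmetry; apply Nat.ltb_lt; lia).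
  replace (n+1+j-(n+1))%nat with j by lia. auto. Qed.
Lemma psiL_x z j : (j < n)%nat -> psiL z j = if r j then - z (n+1+j)%nat else z j.
Proof. intros H. unfold psiL. rewrite idx_x; auto. Qed.
Lemma psiL_u z : psiL z n = Qf z.
Proof. unfold psiL. rewrite Nat.ltb_irrefl, Nat.eqb_refl. auto. Qed.
Lemma psiL_p z j : (j < n)%nat -> psiL z (n+1+j)%nat = if r j then z j else z (n+1+j)%nat.
Proof. intros H. unfold psiL. rewrite ltb_false, eqb_false by lia.
  replace (n+1+j <? 2*n+1)%nat with true by (symmetry; apply Nat.ltb_lt; lia).
  replace (n+1+j-(n+1))%nat with j by lia. auto. Qed.

Lemma idx_cases (P : nat -> Prop) : (forall j, (j < n)%nat -> P j) -> P n ->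
  (forall j, (j < n)%nat -> P (n+1+j)%nat) -> forall a, (a < dimJ1 n)%nat -> P a.
Proof. intros H1 H2 H3 a Ha. unfold dimJ1 in Ha. destruct (lt_dec a n). auto.
  destruct (Nat.eq_dec a n). subst; auto. replace a with (n+1+(a-(n+1)))%nat by lia. apply H3. lia. Qed.

Lemma smooth_Qf m O : (2*n+1 <= m)%nat -> smooth_fun m O Qf.
Proof.
  intros Hm. unfold Qf. apply (smooth_ext _ _ _ (fun z => z n + (-1) * sumR n (fun j => if r j then z j * z (n+1+j)%nat else 0))).
  intros; ring. apply smooth_add. apply smooth_coord; lia. apply smooth_mulc. apply smooth_sumR.
  intros j Hj. destruct (r j). apply smooth_prod; lia. apply smooth_const.
Qed.

Lemma smooth_phiL O : smooth_map (dimJ1 n) (dimJ1 n) O phiL.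
Proof.
  unfold smooth_map. apply (idx_cases (fun j => smooth_fun _ O (fun z => phiL z j))).
  - intros j Hj. apply (smooth_ext _ _ _ (fun z => if r j then z (n+1+j)%nat else z j)). intros; apply phiL_x; auto.
    destruct (r j); apply smooth_coord; unfold dimJ1; lia.
  - apply (smooth_ext _ _ _ Qf). intros; apply phiL_u. apply smooth_Qf. unfold dimJ1; lia.
  - intros j Hj. apply (smooth_ext _ _ _ (fun z => if r j then - z j else z (n+1+j)%nat)). intros; apply phiL_p; auto.
    destruct (r j). apply (smooth_ext _ _ _ (fun z => (-1) * z j)). intros; ring. apply smooth_mulc.
    apply smooth_coord; unfold dimJ1; lia. apply smooth_coord; unfold dimJ1; lia.
Qed.
Lemma smooth_psiL O : smooth_map (dimJ1 n) (dimJ1 n) O psiL.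
Proof.
  unfold smooth_map. apply (idx_cases (fun j => smooth_fun _ O (fun z => psiL z j))).
  - intros j Hj. apply (smooth_ext _ _ _ (fun z => if r j then - z (n+1+j)%nat else z j)). intros; apply psiL_x; auto.
    destruct (r j). apply (smooth_ext _ _ _ (fun z => (-1) * z (n+1+j)%nat)). intros; ring. apply smooth_mulc.
    apply smooth_coord; unfold dimJ1; lia. apply smooth_coord; unfold dimJ1; lia.
  - apply (smooth_ext _ _ _ Qf). intros; apply psiL_u. apply smooth_Qf. unfold dimJ1; lia.
  - intros j Hj. apply (smooth_ext _ _ _ (fun z => if r j then z j else z (n+1+j)%nat)). intros; apply psiL_p; auto.
    destruct (r j); apply smooth_coord; unfold dimJ1; lia.
Qed.

Lemma Qf_phi z : Qf (phiL z) = z n.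
Proof.
  unfold Qf at 1. rewrite phiL_u. unfold Qf.
  rewrite (sumR_ext n (fun j => if r j then phiL z j * phiL z (n+1+j)%nat else 0)
                      (fun j => - (if r j then z j * z (n+1+j)%nat else 0))).
  2:{ intros j Hj. rewrite phiL_x, phiL_p by auto. destruct (r j); ring. }
  rewrite sumR_opp. ring.
Qed.
Lemma Qf_psi z : Qf (psiL z) = z n.
Proof.
  unfold Qf at 1. rewrite psiL_u. unfold Qf.
  rewrite (sumR_ext n (fun j => if r j then psiL z j * psiL z (n+1+j)%nat else 0)
                      (fun j => - (if r j then z j * z (n+1+j)%nat else 0))).
  2:{ intros j Hj. rewrite psiL_x, psiL_p by auto. destruct (r j); ring. }
  rewrite sumR_opp. ring.
Qed.

Lemma psi_phi z : eqv (dimJ1 n) (psiL (phiL z)) z.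
Proof.
  unfold eqv. apply (idx_cases (fun a => psiL (phiL z) a = z a)).
  - intros j Hj. rewrite (psiL_x _ j), (phiL_x z j), (phiL_p z j) by auto. destruct (r j); ring.
  - rewrite psiL_u. apply Qf_phi.
  - intros j Hj. rewrite (psiL_p _ j), (phiL_x z j), (phiL_p z j) by auto. destruct (r j); ring.
Qed.
Lemma phi_psi z : eqv (dimJ1 n) (phiL (psiL z)) z.
Proof.
  unfold eqv. apply (idx_cases (fun a => phiL (psiL z) a = z a)).
  - intros j Hj. rewrite (phiL_x _ j), (psiL_x z j), (psiL_p z j) by auto. destruct (r j); ring.
  - rewrite phiL_u. apply Qf_psi.
  - intros j Hj. rewrite (phiL_p _ j), (psiL_x z j), (psiL_p z j) by auto. destruct (r j); ring.
Qed.

Lemma part_Qf z a : is_partial Qf a z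
   (dl a n - sumR n (fun i => if r i then dl a i * z (n+1+i)%nat + z i * dl a (n+1+i) else 0)).
Proof.
  assert (Hs : is_partial (fun y => sumR n (fun j => if r j then y j * y (n+1+j)%nat else 0)) a z
     (sumR n (fun i => if r i then dl a i * z (n+1+i)%nat + z i * dl a (n+1+i) else 0))).
  { apply part_sumR. intros j _. destruct (r j). apply part_mul; apply part_coord. apply part_const. }
  apply (part_sub _ _ _ _ _ _ (part_coord n a z) Hs).
Qed.

Lemma part_phiL z j a : is_partial (fun y => phiL y j) a z (DJ z j a).
Proof.
  unfold phiL, DJ. destruct (j <? n)%nat.
  - destruct (r j); apply part_coord.
  - destruct (Nat.eqb j n). apply part_Qf. destruct (j <? 2*n+1)%nat. destruct (r (j - (n+1))%nat).
    apply part_opp, part_coord. apply part_coord. apply part_coord.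
Qed.

Lemma dmap_phiL z v : dmap (dimJ1 n) (dimJ1 n) phiL z v (fun j => sumR (dimJ1 n) (fun a => DJ z j a * v a)).
Proof. intros j Hj. exists (DJ z j). split; auto. intros a _. apply part_phiL. Qed.

Lemma dmap_phiL_uniq z v w : dmap (dimJ1 n) (dimJ1 n) phiL z v w ->
  forall j, (j < dimJ1 n)%nat -> w j = sumR (dimJ1 n) (fun a => DJ z j a * v a).
Proof.
  intros H j Hj. destruct (H j Hj) as [J [HJ Hw]]. rewrite Hw. apply sumR_ext. intros a Ha.
  f_equal. apply (uniqueness_limite _ _ _ _ (HJ a Ha) (part_phiL z j a)).
Qed.

Lemma dl_sum f b : (b < dimJ1 n)%nat -> sumR (dimJ1 n) (fun a => dl a b * f a) = f b.
Proof. intros; apply sumR_delta; auto. Qed.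

Lemma DJv_x z v j : (j < n)%nat -> sumR (dimJ1 n) (fun a => DJ z j a * v a) = if r j then v (n+1+j)%nat else v j.
Proof. intros Hj. unfold DJ. rewrite idx_x by auto. destruct (r j); apply dl_sum; unfold dimJ1; lia. Qed.
Lemma DJv_u z v : sumR (dimJ1 n) (fun a => DJ z n a * v a) =
   v n - sumR n (fun i => if r i then v i * z (n+1+i)%nat + z i * v (n+1+i)%nat else 0).
Proof.
  unfold DJ. rewrite Nat.ltb_irrefl, Nat.eqb_refl.
  rewrite (sumR_ext _ _ (fun a => dl a n * v a + - sumR n (fun i => if r i then (dl a i * v a) * z (n+1+i)%nat + z i * (dl a (n+1+i) * v a) else 0))).
  2:{ intros a _.
      rewrite (sumR_ext n (fun i => if r i then dl a i * v a * z (n+1+i)%nat + z i * (dl a (n+1+i) * v a) else 0)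
                 (fun i => v a * (if r i then dl a i * z (n+1+i)%nat + z i * dl a (n+1+i) else 0)))
        by (intros i _; destruct (r i); ring).
      rewrite sumR_scal. ring. }
  rewrite sumR_add, dl_sum by (unfold dimJ1; lia). rewrite sumR_opp, sumR_swap. unfold Rminus. f_equal. f_equal.
  apply sumR_ext. intros i Hi. destruct (r i).
  - rewrite sumR_add. rewrite (sumR_ext _ (fun a => dl a i * v a * z (n+1+i)%nat) (fun a => z (n+1+i)%nat * (dl a i * v a))) by (intros; ring).
    rewrite !sumR_scal, !dl_sum by (unfold dimJ1; lia). ring.
  - apply sumR_zero.
Qed.
Lemma DJv_p z v j : (j < n)%nat -> sumR (dimJ1 n) (fun a => DJ z (n+1+j)%nat a * v a) = if r j then - v j else v (n+1+j)%nat.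
Proof.
  intros Hj. unfold DJ. rewrite ltb_false, eqb_false by lia.
  replace (n+1+j <? 2*n+1)%nat with true by (symmetry; apply Nat.ltb_lt; lia).
  replace (n+1+j-(n+1))%nat with j by lia. destruct (r j).
  - rewrite (sumR_ext _ _ (fun a => - (dl a j * v a))) by (intros; ring). rewrite sumR_opp, dl_sum by (unfold dimJ1; lia). auto.
  - apply dl_sum; unfold dimJ1; lia.
Qed.

Lemma contact_phiL z v w : theta n z v = 0 -> dmap (dimJ1 n) (dimJ1 n) phiL z v w -> theta n (phiL z) w = 0.
Proof.
  intros Ht Hd. pose proof (dmap_phiL_uniq z v w Hd) as Hw. unfold theta in *.
  rewrite Hw by (unfold dimJ1; lia). rewrite DJv_u.
  rewrite (sumR_ext n (fun i => phiL z (n+1+i)%nat * w i) (fun i => if r i then - z i * v (n+1+i)%nat else z (n+1+i)%nat * v i)).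
  2:{ intros i Hi. rewrite phiL_p by auto. rewrite Hw by (unfold dimJ1; lia). rewrite DJv_x by auto. destruct (r i); ring. }
  assert (E : forall B C, sumR n (fun i => z (n+1+i)%nat * v i) = B + C -> v n - B - C = 0) by (intros; lra).
  apply E. rewrite <- sumR_add. apply sumR_ext. intros i Hi. destruct (r i); ring.
Qed.
End Leg.

Lemma local_contact_phiL r n : local_contact n (fun _ => True) (phiL r n).
Proof.
  split. intros x _. exists 1. split; auto; lra.
  split. apply smooth_phiL.
  split. exists (fun _ => True), (psiL r n). split. intros x _. exists 1. split; auto; lra.
  split. apply smooth_psiL. split; intros; split; auto. apply psi_phi. apply phi_psi.
  intros z v w _ Ht Hd. eapply contact_phiL; eauto.
Qed.

Lemma Evec_x n z U i b : (b < n)%nat -> Evec n z U i b = dl b i.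
Proof. intros H. unfold Evec, dl. rewrite idx_x; auto. Qed.
Lemma Evec_u n z U i : Evec n z U i n = z (n+1+i)%nat.
Proof. unfold Evec. rewrite Nat.ltb_irrefl, Nat.eqb_refl. auto. Qed.
Lemma Evec_p n z U i m : (m < n)%nat -> Evec n z U i (n+1+m)%nat = U i m.
Proof. intros H. unfold Evec. rewrite ltb_false, eqb_false by lia.
  replace (n+1+m <? 2*n+1)%nat with true by (symmetry; apply Nat.ltb_lt; lia).
  replace (n+1+m-(n+1))%nat with m by lia. auto. Qed.

Definition Mf (r : nat -> bool) (U : nat -> nat -> R) (i j : nat) : R := if r j then U i j else dl i j.
Definition Nf (r : nat -> bool) (U : nat -> nat -> R) (i j : nat) : R := if r j then - dl i j else U i j.

Lemma dl_sym a b : dl a b = dl b a.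
Proof. unfold dl. rewrite Nat.eqb_sym. auto. Qed.

Section Prol.
Variable r : nat -> bool.
Variable n : nat.
Variable z : nat -> R.
Variable U : nat -> nat -> R.
Definition Af (i j : nat) : R := sumR (dimJ1 n) (fun a => DJ r n z j a * Evec n z U i a).

Lemma Af_x i a : (i < n)%nat -> (a < n)%nat -> Af i a = Mf r U i a.
Proof. intros Hi Ha. unfold Af. rewrite DJv_x by auto. unfold Mf. destruct (r a).
  apply Evec_p; auto. rewrite Evec_x by auto. apply dl_sym. Qed.
Lemma Af_p i m : (i < n)%nat -> (m < n)%nat -> Af i (n+1+m)%nat = Nf r U i m.
Proof. intros Hi Hm. unfold Af. rewrite DJv_p by auto. unfold Nf. destruct (r m).
  rewrite Evec_x by auto. rewrite dl_sym; auto. apply Evec_p; auto. Qed.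
Lemma Af_u i : (i < n)%nat -> Af i n = sumR n (fun j => Mf r U i j * phiL r n z (n+1+j)%nat).
Proof.
  intros Hi. unfold Af. rewrite DJv_u. rewrite Evec_u.
  rewrite (sumR_ext n (fun j => Mf r U i j * phiL r n z (n+1+j)%nat)
     (fun j => dl j i * z (n+1+j)%nat + - (if r j then Evec n z U i j * z (n + 1 + j)%nat + z j * Evec n z U i (n + 1 + j) else 0))).
  2:{ intros j Hj. rewrite phiL_p by auto. rewrite Evec_x, Evec_p by auto. unfold Mf. rewrite (dl_sym i j).
      destruct (r j); ring. }
  rewrite sumR_add, sumR_opp. pose proof (sumR_delta n i (fun j => z (n+1+j)%nat) Hi) as HD. unfold dl. simpl in HD. rewrite HD. ring.
Qed.
End Prol.

Lemma prolong_intro r n z U U' C :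
  sym n U' ->
  (forall i m, (i < n)%nat -> (m < n)%nat -> sumR n (fun j => Mf r U i j * U' j m) = Nf r U i m) ->
  (forall i a, (i < n)%nat -> (a < n)%nat -> sumR n (fun j => C i j * Mf r U j a) = dl i a) ->
  (forall i m, (i < n)%nat -> (m < n)%nat -> U' i m = sumR n (fun j => C i j * Nf r U j m)) ->
  prolong n (phiL r n) (z, U) (phiL r n z, U').
Proof.
  intros Hs h1 h2 h3. split; [auto|]. split; [intros a _; reflexivity|].
  exists (Af r n z U). split. intros i _. apply dmap_phiL. simpl. split.
  - intros i Hi. exists (Mf r U i).
    apply (idx_cases n (fun a => Af r n z U i a = sumR n (fun j => Mf r U i j * Evec n (phiL r n z) U' j a))).
    + intros a Ha. rewrite Af_x by auto.
      rewrite (sumR_ext n _ (fun j => Mf r U i j * dl j a)) by (intros j Hj; rewrite Evec_x by auto; apply f_equal, dl_sym).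
      symmetry. apply sumR_delta'; auto.
    + rewrite Af_u by auto. apply sumR_ext. intros j Hj. rewrite Evec_u. auto.
    + intros m Hm. rewrite Af_p by auto. rewrite <- h1 by auto. apply sumR_ext. intros j Hj. rewrite Evec_p; auto.
  - intros i Hi. exists (C i).
    apply (idx_cases n (fun a => Evec n (phiL r n z) U' i a = sumR n (fun j => C i j * Af r n z U j a))).
    + intros a Ha. rewrite Evec_x by auto. rewrite (sumR_ext n _ (fun j => C i j * Mf r U j a)) by (intros j Hj; rewrite Af_x; auto).
      rewrite h2 by auto. apply dl_sym.
    + rewrite Evec_u. rewrite (sumR_ext n _ (fun j => sumR n (fun p => C i j * Mf r U j p * phiL r n z (n+1+p)%nat))).
      2:{ intros j Hj. rewrite Af_u by auto. rewrite <- sumR_scal. apply sumR_ext. intros; ring. }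
      rewrite sumR_swap. rewrite (sumR_ext n _ (fun p => dl i p * phiL r n z (n+1+p)%nat)).
      2:{ intros p Hp. rewrite <- h2 by auto. rewrite (Rmult_comm _ (phiL r n z _)). rewrite <- sumR_scal. apply sumR_ext. intros; ring. }
      rewrite (sumR_ext n _ (fun p => dl p i * phiL r n z (n+1+p)%nat)) by (intros; rewrite dl_sym; auto).
      symmetry. apply (sumR_delta n i (fun p => phiL r n z (n+1+p)%nat)). auto.
    + intros m Hm. rewrite Evec_p by auto. rewrite h3 by auto. apply sumR_ext. intros j Hj. rewrite Af_p; auto.
Qed.

Lemma prolong_h1 r n z U P' : prolong n (phiL r n) (z, U) P' ->
  forall i m, (i < n)%nat -> (m < n)%nat -> sumR n (fun j => Mf r U i j * snd P' j m) = Nf r U i m.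
Proof.
  intros [Hs [He [A [HA [Hsp _]]]]] i m Hi Hm. simpl in *.
  assert (EA : forall a, (a < dimJ1 n)%nat -> A i a = Af r n z U i a).
  { intros a Ha. unfold Af. apply (dmap_phiL_uniq r n z _ _ (HA i Hi)); auto. }
  destruct (Hsp i Hi) as [c Hc].
  assert (Ec : forall a, (a < n)%nat -> c a = Mf r U i a).
  { intros a Ha. rewrite <- (Af_x r n z U i a) by auto. rewrite <- EA by (unfold dimJ1; lia). rewrite Hc by (unfold dimJ1; lia).
    rewrite (sumR_ext n _ (fun j => c j * dl j a)) by (intros j Hj; rewrite Evec_x by auto; apply f_equal, dl_sym).
    symmetry. apply sumR_delta'; auto. }
  rewrite <- (Af_p r n z U i m) by auto. rewrite <- EA by (unfold dimJ1; lia).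
  rewrite Hc by (unfold dimJ1; lia). apply sumR_ext. intros j Hj. rewrite Evec_p by auto. rewrite Ec; auto.
Qed.

From mathcomp Require ssreflect all_boot all_algebra Rstruct.

Module LA.
Import ssreflect.
Import ssrfun ssrbool eqtype ssrnat seq choice fintype bigop finfun.
Import all_algebra Rstruct.
Import GRing.Theory Num.Theory.
Local Open Scope ring_scope.

Lemma sumR_big m f : sumR m f = \sum_(i < m) f i.
Proof. elim: m => [|m IH]; first by rewrite big_ord0. by rewrite big_ord_recr /= IH. Qed.

Definition mx n (F : nat -> nat -> R) : 'M[R]_n := \matrix_(i < n, j < n) F i j.
Definition getm n (A : 'M[R]_n) (i j : nat) : R :=
  match (insub i : option 'I_n), (insub j : option 'I_n) with
  | Some i', Some j' => A i' j'
  | _, _ => 0 end.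

Arguments getm {n}.
Lemma getmE n (A : 'M[R]_n) (i j : 'I_n) : getm A i j = A i j.
Proof. by rewrite /getm !valK. Qed.
Lemma ltbE a b : Nat.ltb a b = (a < b)%N.
Proof. by apply/idP/idP => [/Nat.ltb_lt/ltP | /ltP/Nat.ltb_lt]. Qed.
Lemma eqbE a b : Nat.eqb a b = (a == b).
Proof. by apply/idP/idP => [/Nat.eqb_eq/eqP | /eqP/Nat.eqb_eq]. Qed.
Lemma m1pow j : Rpow_def.pow (IZR (Zneg xH)) j = (-1) ^+ j :> R.
Proof.
  elim: j => [|j IH] /=. by []. rewrite exprS IH RmultE. by congr (_ * _).
Qed.
Lemma detk_det k : forall F, detk k F = \det (mx k F).
Proof.
  elim: k => [|k IH] F; first by rewrite det_mx00.
  have -> : detk k.+1 F = sumR k.+1 (fun j => Rmult (Rmult (Rpow_def.pow (IZR (Zneg xH)) j) (F 0%N j)) (detk k (minor F j))) by [].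
  rewrite (expand_det_row _ ord0) sumR_big. apply: eq_bigr => j _.
  rewrite /cofactor IH mxE m1pow -!RmultE add0n.
  have -> : mx k (minor F j) = row' ord0 (col' j (mx k.+1 F)).
    apply/matrixP => a b. rewrite !mxE /minor /= /bump ltbE.
    by case: (ltnP b j).
  by rewrite !RmultE mulrCA mulrA.
Qed.
Definition getv n (v : 'rV[R]_n) (a : nat) : R :=
  match (insub a : option 'I_n) with Some a' => v 0 a' | None => 0 end.
Arguments getv {n}.
Lemma getvE n (v : 'rV[R]_n) (i : 'I_n) : getv v i = v 0 i.
Proof. by rewrite /getv valK. Qed.

Arguments mx n F : clear implicits.
Lemma mulmx_entry n (v : 'rV[R]_n) F (j : 'I_n) :
  (v *m mx n F) 0 j = sumR n (fun i => Rmult (getv v i) (F i j)).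
Proof. rewrite !mxE sumR_big. apply: eq_bigr => i _. by rewrite getvE mxE. Qed.

Lemma L_det0 k F : detk k F = IZR Z0 <->
  exists f : nat -> R, (exists a, (a < k)%coq_nat /\ f a <> IZR Z0) /\
    forall j, (j < k)%coq_nat -> sumR k (fun i => Rmult (f i) (F i j)) = IZR Z0.
Proof.
  rewrite detk_det. split.
  - move=> /eqP /det0P [v Hv0 Hv]. exists (getv v). split.
    + have [i Hi] : exists i, v 0 i != 0.
        apply/existsP. move: Hv0. apply: contraR. rewrite negb_exists => /forallP H.
        apply/eqP/matrixP => a b. rewrite (ord1 a) mxE. exact/eqP/negPn/(H b).
      exists i. split. exact/ltP. rewrite getvE. exact/eqP.
    + move=> j Hj. have Hj' : (j < k)%N by apply/ltP.
      rewrite -(@mulmx_entry k v F (Ordinal Hj')) Hv. by rewrite mxE.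
  - move=> [f [[a [Ha Hfa]] Hf]]. apply/eqP/det0P. exists (\row_(i < k) f i).
    + apply/eqP => /matrixP /(_ 0 (Ordinal (introT ltP Ha))). rewrite !mxE /=. exact: Hfa.
    + apply/matrixP => i j. rewrite (ord1 i) mulmx_entry mxE.
      apply: (etrans _ (Hf j (elimT ltP (ltn_ord j)))). apply: (sumR_ext) => b /ltP Hb.
      by rewrite (_ : b = Ordinal Hb) // getvE mxE.
Qed.

Lemma mulmx_getm n (A B : 'M[R]_n) (i j : 'I_n) :
  (A *m B) i j = sumR n (fun p => Rmult (getm A i p) (getm B p j)).
Proof. rewrite !mxE sumR_big. apply: eq_bigr => p _. by rewrite !getmE. Qed.
Lemma getm_mx n F (i j : 'I_n) : getm (mx n F) i j = F i j.
Proof. by rewrite getmE mxE. Qed.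
Lemma getm_mxn n F i j : (i < n)%N -> (j < n)%N -> getm (mx n F) i j = F i j.
Proof. move=> Hi Hj. by rewrite (_ : i = Ordinal Hi) // (_ : j = Ordinal Hj) // getm_mx. Qed.
Lemma ord_of n a (H : (a < n)%coq_nat) : { i : 'I_n | val i = a }.
Proof. by exists (Ordinal (introT ltP H)). Qed.
Lemma dl_mx n (i a : 'I_n) : dl i a = (1%:M : 'M[R]_n) i a.
Proof. rewrite mxE /dl eqbE val_eqE. by case: (i == a). Qed.

Lemma L_inv n M :
  (forall f : nat -> R, (forall j, (j < n)%coq_nat -> sumR n (fun i => Rmult (f i) (M i j)) = IZR Z0) ->
      forall a, (a < n)%coq_nat -> f a = IZR Z0) ->
  exists C : nat -> nat -> R,
    (forall i a, (i < n)%coq_nat -> (a < n)%coq_nat -> sumR n (fun j => Rmult (C i j) (M j a)) = dl i a) /\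
    (forall i a, (i < n)%coq_nat -> (a < n)%coq_nat -> sumR n (fun j => Rmult (M i j) (C j a)) = dl i a).
Proof.
  move=> Hker.
  have Hu : mx n M \in unitmx.
    rewrite unitmxE unitfE. apply/negP => /det0P [v Hv0 Hv]. move/negP: Hv0; apply.
    apply/eqP/matrixP => i j. rewrite (ord1 i) mxE -getvE. apply: Hker; last exact/ltP.
    move=> p /ltP Hp. have := congr1 (fun A : 'M[R]_(1,n) => A 0 (Ordinal Hp)) Hv. rewrite /= mulmx_entry mxE => H. exact: H.
  exists (getm (invmx (mx n M))). split.
  - move=> i a /ltP Hi /ltP Ha.
    have := congr1 (fun A : 'M[R]_n => A (Ordinal Hi) (Ordinal Ha)) (mulVmx Hu). rewrite mulmx_getm /= -dl_mx /= => <-.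
    apply: sumR_ext => j /ltP Hj. by rewrite getm_mxn.
  - move=> i a /ltP Hi /ltP Ha.
    have := congr1 (fun A : 'M[R]_n => A (Ordinal Hi) (Ordinal Ha)) (mulmxV Hu). rewrite mulmx_getm /= -dl_mx /= => <-.
    apply: sumR_ext => j /ltP Hj. by rewrite getm_mxn.
Qed.
End LA.

Set Bullet Behavior "Strict Subproofs".
Open Scope R_scope.
From Stdlib Require Import Reals Arith Lia Lra.
Open Scope R_scope.
Set Bullet Behavior "Strict Subproofs".

Lemma sumR_abs m f : Rabs (sumR m f) <= sumR m (fun a => Rabs (f a)).
Proof. induction m; simpl. rewrite Rabs_R0; lra. eapply Rle_trans. apply Rabs_triang. lra. Qed.
Lemma sumR_trunc n k g : (k <= n)%nat -> (forall i, (k <= i < n)%nat -> g i = 0) -> sumR n g = sumR k g.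
Proof.
  induction n; intros Hk H. replace k with 0%nat by lia. auto.
  destruct (Nat.eq_dec k (S n)). subst; auto.
  simpl. rewrite H by lia. rewrite IHn. ring. lia. intros i Hi; apply H; lia.
Qed.
Lemma argmax n (g : nat -> R) : (0 < n)%nat -> exists b, (b < n)%nat /\ forall a, (a < n)%nat -> g a <= g b.
Proof.
  induction n; intros H; [lia|]. destruct n.
  - exists 0%nat. split; auto. intros a Ha. replace a with 0%nat by lia. lra.
  - destruct (IHn ltac:(lia)) as [b [Hb Hm]]. destruct (Rle_dec (g (S n)) (g b)).
    + exists b. split; [lia|]. intros a Ha. destruct (Nat.eq_dec a (S n)). subst; auto. apply Hm; lia.
    + exists (S n). split; [lia|]. intros a Ha. destruct (Nat.eq_dec a (S n)). subst; lra. pose proof (Hm a ltac:(lia)). lra.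
Qed.

Lemma sumR_dl m b f : (b < m)%nat -> sumR m (fun a => dl a b * f a) = f b.
Proof. apply sumR_delta. Qed.
Lemma sumR_dl' m b f : (b < m)%nat -> sumR m (fun a => dl b a * f a) = f b.
Proof. intros H. rewrite <- (sumR_dl m b f H). apply sumR_ext. intros. rewrite dl_sym. auto. Qed.

Lemma abs0 x : Rabs x <= 0 -> x = 0.
Proof. intros H. destruct (Req_dec x 0); auto. pose proof (Rabs_pos_lt x H0). lra. Qed.

Definition U0 (r : nat -> bool) (i j : nat) : R := if andb (Nat.eqb i j) (r i) then 1 else 0.
Definition close (r : nat -> bool) n (U : nat -> nat -> R) : Prop :=
  sumR n (fun i => sumR n (fun j => Rabs (U i j - U0 r i j))) < 1/2.

Lemma col_le r n U b : (b < n)%nat ->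
  sumR n (fun i => Rabs (U i b - U0 r i b)) <= sumR n (fun i => sumR n (fun j => Rabs (U i j - U0 r i j))).
Proof. intros Hb. apply sumR_le. intros i Hi. apply (sumR_term n (fun j => Rabs (U i j - U0 r i j))); auto.
  intros; apply Rabs_pos. Qed.

Lemma ker_M r n U : close r n U -> forall f, (forall j, (j < n)%nat -> sumR n (fun i => f i * Mf r U i j) = 0) ->
  forall a, (a < n)%nat -> f a = 0.
Proof.
  intros Hc f Hf a Ha. destruct (argmax n (fun i => Rabs (f i)) ltac:(lia)) as [b [Hb Hm]].
  assert (Hfb : f b = 0).
  { specialize (Hf b Hb). unfold Mf in Hf. destruct (r b) eqn:Er.
    - assert (E : sumR n (fun i => f i * U i b) = f b + sumR n (fun i => f i * (U i b - U0 r i b))).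
      { rewrite (sumR_ext n (fun i => f i * (U i b - U0 r i b)) (fun i => f i * U i b + - (dl i b * f i))).
        rewrite sumR_add, sumR_opp. rewrite (sumR_dl n b f Hb). ring.
        intros i Hi. unfold U0, dl. rewrite Nat.eqb_sym. destruct (Nat.eqb b i) eqn:E2.
        apply Nat.eqb_eq in E2. subst. rewrite Er. simpl. ring. simpl. ring. }
      rewrite E in Hf.
      assert (Habs : Rabs (f b) <= Rabs (f b) * sumR n (fun i => Rabs (U i b - U0 r i b))).
      { assert (Hfb' : f b = - sumR n (fun i => f i * (U i b - U0 r i b))) by lra. rewrite Hfb' at 1. rewrite Rabs_Ropp.
        eapply Rle_trans. apply sumR_abs. rewrite <- sumR_scal. apply sumR_le. intros i Hi.
        rewrite Rabs_mult. apply Rmult_le_compat_r. apply Rabs_pos. auto. }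
      pose proof (col_le r n U b Hb). unfold close in Hc. pose proof (Rabs_pos (f b)).
      assert (Rabs (f b) * sumR n (fun i => Rabs (U i b - U0 r i b)) <= Rabs (f b) * (1/2)).
      { apply Rmult_le_compat_l; lra. }
      apply abs0. lra.
    - rewrite (sumR_ext n _ (fun i => dl i b * f i)) in Hf by (intros; ring). rewrite sumR_dl in Hf; auto. }
  pose proof (Hm a Ha). rewrite Hfb, Rabs_R0 in H. pose proof (Rabs_pos (f a)).
  apply abs0. lra.
Qed.

Lemma sumR_scal_r m f c : sumR m (fun a => f a * c) = sumR m f * c.
Proof. rewrite (sumR_ext m _ (fun a => c * f a)) by (intros; ring). rewrite sumR_scal. ring. Qed.
Lemma assoc3 n (a : nat -> R) (B : nat -> nat -> R) (c : nat -> R) :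
  sumR n (fun j => a j * sumR n (fun p => B j p * c p)) = sumR n (fun p => sumR n (fun j => a j * B j p) * c p).
Proof.
  rewrite (sumR_ext n _ (fun j => sumR n (fun p => a j * B j p * c p))).
  2:{ intros j _. rewrite <- sumR_scal. apply sumR_ext. intros; ring. }
  rewrite sumR_swap. apply sumR_ext. intros p _. rewrite <- sumR_scal_r. auto.
Qed.

Lemma MN_sym r n U i k : sym n U -> (i < n)%nat -> (k < n)%nat ->
  sumR n (fun j => Mf r U i j * Nf r U k j) = sumR n (fun j => Nf r U i j * Mf r U k j).
Proof.
  intros Hs Hi Hk.
  rewrite (sumR_ext n _ (fun j => dl j k * (if r j then - U i j else 0) + dl j i * (if r j then 0 else U k j))).
  2:{ intros j Hj. unfold Mf, Nf. rewrite (dl_sym k j), (dl_sym i j). destruct (r j); ring. }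
  rewrite sumR_add, sumR_dl, sumR_dl by auto.
  rewrite (sumR_ext n _ (fun j => dl j i * (if r j then - U k j else 0) + dl j k * (if r j then 0 else U i j))).
  2:{ intros j Hj. unfold Mf, Nf. rewrite (dl_sym k j), (dl_sym i j). destruct (r j); ring. }
  rewrite sumR_add, sumR_dl, sumR_dl by auto. rewrite (Hs k i) by auto.
  destruct (r i), (r k); ring.
Qed.

Lemma LA1 r n U : close r n U -> sym n U ->
  exists U' C, sym n U' /\
  (forall i m, (i < n)%nat -> (m < n)%nat -> sumR n (fun j => Mf r U i j * U' j m) = Nf r U i m) /\
  (forall i a, (i < n)%nat -> (a < n)%nat -> sumR n (fun j => C i j * Mf r U j a) = dl i a) /\
  (forall i m, (i < n)%nat -> (m < n)%nat -> U' i m = sumR n (fun j => C i j * Nf r U j m)).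
Proof.
  intros Hc Hs. destruct (LA.L_inv n (Mf r U) (ker_M r n U Hc)) as [C [HCM HMC]].
  set (U' := fun i m => sumR n (fun j => C i j * Nf r U j m)).
  assert (h1 : forall i m, (i < n)%nat -> (m < n)%nat -> sumR n (fun j => Mf r U i j * U' j m) = Nf r U i m).
  { intros i m Hi Hm. unfold U'. rewrite assoc3. rewrite (sumR_ext n _ (fun p => dl i p * Nf r U p m)).
    apply (sumR_dl' n i (fun p => Nf r U p m)); auto. intros p Hp. rewrite HMC; auto. }
  exists U', C. split; [|split; [auto|split; [auto|]]].
  2:{ intros; unfold U'; auto. }
  assert (ha : forall i k, (i < n)%nat -> (k < n)%nat -> sumR n (fun j => Mf r U i j * U' k j) = Nf r U i k).
  { intros i k Hi Hk. unfold U'.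
    rewrite (sumR_ext n _ (fun j => sumR n (fun p => C k p * (Mf r U i j * Nf r U p j)))).
    2:{ intros j _. rewrite <- sumR_scal. apply sumR_ext. intros; ring. }
    rewrite sumR_swap. rewrite (sumR_ext n _ (fun p => C k p * sumR n (fun j => Nf r U i j * Mf r U p j))).
    2:{ intros p Hp. rewrite <- MN_sym by auto. rewrite <- sumR_scal. auto. }
    rewrite (sumR_ext n _ (fun p => sumR n (fun j => Nf r U i j * (C k p * Mf r U p j)))).
    2:{ intros p _. rewrite <- sumR_scal. apply sumR_ext. intros; ring. }
    rewrite sumR_swap. rewrite (sumR_ext n _ (fun j => Nf r U i j * dl k j)).
    2:{ intros j Hj. rewrite <- HCM by auto. rewrite <- sumR_scal. auto. }
    rewrite (sumR_ext n _ (fun j => dl j k * Nf r U i j)) by (intros; rewrite dl_sym; ring).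
    apply (sumR_dl n k (fun j => Nf r U i j)); auto. }
  intros i k Hi Hk.
  rewrite <- (sumR_dl' n i (fun j => U' k j) Hi).
  rewrite (sumR_ext n _ (fun j => sumR n (fun p => C i p * Mf r U p j) * U' k j)).
  2:{ intros j Hj. rewrite HCM; auto. }
  rewrite <- assoc3. unfold U' at 1. apply sumR_ext. intros p Hp. f_equal. symmetry. apply ha; auto.
Qed.

Definition Ck n k (U : nat -> nat -> R) : Prop :=
  exists f : nat -> R, (exists a, (a < n)%nat /\ f a <> 0) /\
    (forall j, (k <= j < n)%nat -> f j = 0) /\
    (forall j, (j < k)%nat -> sumR n (fun i => f i * U i j) = 0).

Lemma detk_Ck n k U : (k <= n)%nat -> (detk k U = 0 <-> Ck n k U).
Proof.
  intros Hk. rewrite LA.L_det0. split.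
  - intros [f [[a [Ha Hfa]] Hf]]. exists (fun i => if (i <? k)%nat then f i else 0). split; [|split].
    + exists a. split. lia. rewrite (proj2 (Nat.ltb_lt a k) Ha). auto.
    + intros j Hj. rewrite (proj2 (Nat.ltb_ge j k)) by lia. auto.
    + intros j Hj. rewrite (sumR_trunc n k) by (auto; intros i Hi; rewrite (proj2 (Nat.ltb_ge i k)) by lia; ring).
      rewrite <- (Hf j Hj). apply sumR_ext. intros i Hi. rewrite (proj2 (Nat.ltb_lt i k) Hi). auto.
  - intros [f [[a [Ha Hfa]] [Hs Hf]]]. exists f. split.
    + exists a. split; auto. destruct (lt_dec a k); auto. exfalso. apply Hfa. apply Hs. lia.
    + intros j Hj. rewrite <- (Hf j Hj). symmetry. apply sumR_trunc; auto. intros i Hi. rewrite Hs by lia. ring.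
Qed.

Definition rk (k l j : nat) : bool := andb (Nat.leb (Nat.min k l) j) (Nat.ltb j (Nat.max k l)).
Lemma rk_true k l j : rk k l j = true <-> (Nat.min k l <= j < Nat.max k l)%nat.
Proof. unfold rk. rewrite Bool.andb_true_iff, Nat.leb_le, Nat.ltb_lt. tauto. Qed.
Lemma rk_false k l j : rk k l j = false <-> ~ (Nat.min k l <= j < Nat.max k l)%nat.
Proof. rewrite <- rk_true. destruct (rk k l j); split; auto; intros H; try discriminate. exfalso; auto. Qed.

Lemma supp_fw k l n (a b a' b' : nat -> R) : (k <= n)%nat -> (l <= n)%nat ->
  (forall j, (j < n)%nat -> a' j = (if rk k l j then b j else a j) /\ b' j = (if rk k l j then - a j else b j)) ->
  (forall j, (k <= j < n)%nat -> a j = 0) -> (forall j, (j < k)%nat -> b j = 0) ->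
  (forall j, (l <= j < n)%nat -> a' j = 0) /\ (forall j, (j < l)%nat -> b' j = 0).
Proof.
  intros Hk Hl H Ha Hb. split.
  - intros j Hj. destruct (H j ltac:(lia)) as [E _]. rewrite E. destruct (rk k l j) eqn:R.
    + apply rk_true in R. apply Hb. lia.
    + apply rk_false in R. apply Ha. lia.
  - intros j Hj. destruct (H j ltac:(lia)) as [_ E]. rewrite E. destruct (rk k l j) eqn:R.
    + apply rk_true in R. rewrite Ha by lia. ring.
    + apply rk_false in R. apply Hb. lia.
Qed.
Lemma supp_bw k l n (a b a' b' : nat -> R) : (k <= n)%nat -> (l <= n)%nat ->
  (forall j, (j < n)%nat -> a' j = (if rk k l j then b j else a j) /\ b' j = (if rk k l j then - a j else b j)) ->
  (forall j, (l <= j < n)%nat -> a' j = 0) -> (forall j, (j < l)%nat -> b' j = 0) ->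
  (forall j, (k <= j < n)%nat -> a j = 0) /\ (forall j, (j < k)%nat -> b j = 0).
Proof.
  intros Hk Hl H Ha Hb. split.
  - intros j Hj. destruct (H j ltac:(lia)) as [E1 E2]. destruct (rk k l j) eqn:R.
    + apply rk_true in R. assert (b' j = 0) by (apply Hb; lia). lra.
    + apply rk_false in R. rewrite <- E1. apply Ha. lia.
  - intros j Hj. destruct (H j ltac:(lia)) as [E1 E2]. destruct (rk k l j) eqn:R.
    + apply rk_true in R. rewrite <- E1. apply Ha. lia.
    + apply rk_false in R. rewrite <- E2. apply Hb. lia.
Qed.

Section DetEq.
Variables (r : nat -> bool) (n : nat) (U U'' : nat -> nat -> R).
Hypothesis h1 : forall i m, (i < n)%nat -> (m < n)%nat -> sumR n (fun j => Mf r U i j * U'' j m) = Nf r U i m.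

Definition vm (f : nat -> R) (A : nat -> nat -> R) (j : nat) : R := sumR n (fun i => f i * A i j).

Lemma vm_M f j : (j < n)%nat -> vm f (Mf r U) j = if r j then vm f U j else f j.
Proof. intros Hj. unfold vm, Mf. destruct (r j). auto.
  rewrite (sumR_ext n _ (fun i => dl i j * f i)) by (intros; ring). apply sumR_dl; auto. Qed.
Lemma vm_N f j : (j < n)%nat -> vm f (Nf r U) j = if r j then - f j else vm f U j.
Proof. intros Hj. unfold vm, Nf. destruct (r j); auto.
  rewrite (sumR_ext n _ (fun i => - (dl i j * f i))) by (intros; ring). rewrite sumR_opp, sumR_dl; auto. Qed.
Lemma vm_MU f j : (j < n)%nat -> vm (vm f (Mf r U)) U'' j = vm f (Nf r U) j.
Proof.
  intros Hj. unfold vm at 1. unfold vm at 1.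
  rewrite <- assoc3. apply sumR_ext. intros p Hp. f_equal. apply h1; auto.
Qed.
Lemma vm_assoc f A B a : vm (vm f A) B a = sumR n (fun p => f p * vm (A p) B a).
Proof. unfold vm. symmetry. rewrite assoc3. auto. Qed.
End DetEq.

From Stdlib Require Import Classical.
Lemma det_equiv k l n U U'' : (1 <= k <= n)%nat -> (1 <= l <= n)%nat -> close (rk k l) n U ->
  (forall i m, (i < n)%nat -> (m < n)%nat -> sumR n (fun j => Mf (rk k l) U i j * U'' j m) = Nf (rk k l) U i m) ->
  (detk k U = 0 <-> detk l U'' = 0).
Proof.
  intros Hk Hl Hc h1. set (r := rk k l) in *.
  destruct (LA.L_inv n (Mf r U) (ker_M r n U Hc)) as [C [HCM HMC]].
  rewrite (detk_Ck n k U), (detk_Ck n l U'') by lia. split.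
  - intros [f [Hnz [Hs Hf]]]. exists (vm n f (Mf r U)).
    assert (Hrel : forall j, (j < n)%nat -> vm n f (Mf r U) j = (if r j then vm n f U j else f j) /\
                                 vm n f (Nf r U) j = (if r j then - f j else vm n f U j)).
    { intros j Hj. split. apply vm_M; auto. apply vm_N; auto. }
    destruct (supp_fw k l n f (vm n f U) _ _ ltac:(lia) ltac:(lia) Hrel Hs Hf) as [S1 S2].
    split; [|split]; auto.
    + destruct (classic (exists a, (a < n)%nat /\ vm n f (Mf r U) a <> 0)) as [E|E]; auto. exfalso.
      destruct Hnz as [a [Ha Hfa]]. apply Hfa.
      assert (vm n (vm n f (Mf r U)) C a = f a).
      { rewrite vm_assoc. unfold vm. rewrite (sumR_ext n _ (fun p => dl p a * f p)).
        apply sumR_dl; auto. intros p Hp. rewrite HMC; auto. ring. }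
      rewrite <- H. unfold vm at 1. rewrite <- (sumR_zero n). apply sumR_ext. intros i Hi.
      destruct (Req_dec (vm n f (Mf r U) i) 0) as [Z|Z]. rewrite Z; ring. exfalso; apply E; eauto.
    + intros j Hj. change (vm n (vm n f (Mf r U)) U'' j = 0). rewrite (vm_MU r n U U'') by (auto; lia).
      apply S2; auto.
  - intros [f' [Hnz [Hs Hf]]]. set (f := vm n f' C).
    assert (HfM : forall j, (j < n)%nat -> vm n f (Mf r U) j = f' j).
    { intros j Hj. unfold f. rewrite vm_assoc. unfold vm. rewrite (sumR_ext n _ (fun p => dl p j * f' p)).
      apply sumR_dl; auto. intros p Hp. rewrite HCM; auto. ring. }
    assert (Hrel : forall j, (j < n)%nat -> vm n f (Mf r U) j = (if r j then vm n f U j else f j) /\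
                                 vm n f (Nf r U) j = (if r j then - f j else vm n f U j)).
    { intros j Hj. split. apply vm_M; auto. apply vm_N; auto. }
    assert (HN : forall j, (j < n)%nat -> vm n f (Nf r U) j = vm n f' U'' j).
    { intros j Hj. rewrite <- (vm_MU r n U U'' h1) by auto. unfold vm at 1. unfold vm at 2.
      apply sumR_ext. intros i Hi. rewrite HfM; auto. }
    destruct (supp_bw k l n f (vm n f U) _ _ ltac:(lia) ltac:(lia) Hrel) as [S1 S2].
    + intros j Hj. rewrite HfM by lia. apply Hs; auto.
    + intros j Hj. rewrite HN by lia. apply Hf; auto.
    + exists f. split; [|split]; auto.
      destruct (classic (exists a, (a < n)%nat /\ f a <> 0)) as [E|E]; auto. exfalso.
      destruct Hnz as [a [Ha Hfa]]. apply Hfa. rewrite <- HfM by auto. unfold vm. rewrite <- (sumR_zero n).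
      apply sumR_ext. intros i Hi.
      destruct (Req_dec (f i) 0) as [Z|Z]. rewrite Z; ring. exfalso; apply E; eauto.
Qed.
From Stdlib Require Import Reals Arith Lia Lra.
Open Scope R_scope.
Set Bullet Behavior "Strict Subproofs".

Lemma open_W r n : open_J2 n (fun P => sym n (snd P) /\ close r n (snd P)).
Proof.
  intros [z U] [Hs Hc]. split; auto. simpl in *. unfold close in Hc.
  set (S := sumR n (fun i => sumR n (fun j => Rabs (U i j - U0 r i j)))) in *.
  assert (HS : 0 <= S) by (apply sumR_nonneg; intros; apply sumR_nonneg; intros; apply Rabs_pos).
  assert (Hn : 0 <= INR n) by apply pos_INR.
  set (eps := (1/2 - S) / (INR n * INR n + 1)).
  assert (He : 0 < eps) by (unfold eps; apply Rdiv_lt_0_compat; nra).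
  exists eps. split; auto. intros [z' U'] Hs' _ HU. split; auto. simpl in *. unfold close.
  apply Rle_lt_trans with (sumR n (fun i => sumR n (fun j => Rabs (U' i j - U i j) + Rabs (U i j - U0 r i j)))).
  { apply sumR_le. intros i Hi. apply sumR_le. intros j Hj.
    replace (U' i j - U0 r i j) with ((U' i j - U i j) + (U i j - U0 r i j)) by ring. apply Rabs_triang. }
  rewrite (sumR_ext n _ (fun i => sumR n (fun j => Rabs (U' i j - U i j)) + sumR n (fun j => Rabs (U i j - U0 r i j))))
    by (intros; apply sumR_add).
  rewrite sumR_add. fold S.
  assert (sumR n (fun i => sumR n (fun j => Rabs (U' i j - U i j))) <= INR n * (INR n * eps)).
  { apply sumR_const_le. intros i Hi. apply sumR_const_le. intros j Hj. left. apply HU; auto. }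
  assert (INR n * (INR n * eps) < 1/2 - S).
  { assert (E : eps * (INR n * INR n + 1) = 1/2 - S) by (unfold eps; field; nra). nra. }
  lra.
Qed.

Theorem corollary9p3 (n k l : nat) :
  (1 <= n)%nat -> (1 <= k <= n)%nat -> (1 <= l <= n)%nat ->
  exists (O : (nat -> R) -> Prop) (phi : (nat -> R) -> (nat -> R)) (W : J2pt -> Prop),
    local_contact n O phi /\
    open_J2 n W /\
    (forall P, W P -> O (fst P)) /\
    (forall P, W P -> exists P', prolong n phi P P') /\
    (forall P P', W P -> prolong n phi P P' ->
       (detk k (snd P) = 0 <-> detk l (snd P') = 0)) /\
    (exists P, W P /\ detk k (snd P) = 0).
Proof.
  intros Hn Hk Hl. set (r := rk k l).
  exists (fun _ => True), (phiL r n), (fun P => sym n (snd P) /\ close r n (snd P)).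
  split; [apply (local_contact_phiL r n)|].
  split; [apply open_W|].
  split; [auto|].
  split.
  { intros [z U] [Hs Hc]. simpl in *. destruct (LA1 r n U Hc Hs) as [U' [C [HS [h1 [h2 h3]]]]].
    exists (phiL r n z, U'). apply prolong_intro with C; auto. }
  split.
  { intros [z U] P' [Hs Hc] Hp. simpl in *. apply (det_equiv k l n); auto.
    apply (prolong_h1 r n z U P' Hp). }
  exists ((fun _ => 0), U0 r). split. split.
  - intros i j _ _. simpl. unfold U0. destruct (Nat.eqb_spec i j) as [E|E].
    + subst. rewrite ?Nat.eqb_refl. reflexivity.
    + rewrite (proj2 (Nat.eqb_neq j i)) by auto. auto.
  - simpl. unfold close. rewrite (sumR_ext n _ (fun _ => 0)). rewrite sumR_zero; lra.
    intros i _. rewrite (sumR_ext n _ (fun _ => 0)). apply sumR_zero. intros j _.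
    rewrite Rminus_diag, Rabs_R0. auto.
  - cbn [snd]. destruct k as [|k']; [lia|].
    change (detk (S k') (U0 r)) with (sumR (S k') (fun j => (-1)^j * U0 r 0 j * detk k' (minor (U0 r) j))).
    rewrite (sumR_ext (S k') _ (fun _ => 0)). apply sumR_zero.
    intros j _. unfold U0. replace (r 0%nat) with false.
    destruct (Nat.eqb 0 j); simpl; ring.
    symmetry. apply rk_false. lia.
Qed.
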